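(* Fix $1<p<\infty$. Fix natural numbers $l_1,\dots,l_d$, $0<\mu<1$, $\lambda,\Theta>0$, and $M>\lambda/\Theta$. Then for any $0<\eta_1<1$ there exists $0<\eta<\eta_1$ with the following property. Suppose $l_{d+1}$ is a natural number, $L=\prod_{i=1}^{d+1}l_i$, $T=\bigcup_{i=0}^{d+1}\Lambda_i$ is an $(l_1,\dots,l_{d+1})$ interval tree, and $(r_I)_{I\in T},(s_I)_{I\in T}$ are non-negative numbers such that (i) for each $I\in T$, $r_I\le\lambda s_I$; (ii) for each $I\in T\setminus\Lambda_{d+1}$, $r_I\le\sum_{J^-=I}r_J$ and $s_I\le\sum_{J^-=I}s_J$; (iii) for each $I\in\Lambda_d$, $r_I^p\le(1+\eta)\Theta^p l_{d+1}^{p-1}\sum_{J^-=I}s_J^p$; (iv) $r_{[L]}^p>(1-\eta)\Theta^p\bigl(\prod_{i=1}^{d+1}l_i^{p-1}\bigr)\sum_{I\in\Lambda_{d+1}}s_I^p$. Then for any $0\le j\le d$, $\max_{I\in\Lambda_j}s_I\le M\min_{I\in\Lambda_j}s_I$, and for any $0\le i<d$ and $I_1\in\Lambda_i$, $r_{I_1}^p>(1-\mu)l_{i+1}^{p-1}\sum_{J^-=I_1}r_J^p$.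
   Context: $[n]=\{1,\dots,n\}$. Given natural numbers $l_1,\dots,l_{k}$ with $L=\prod_{j=1}^{k}l_j$, an $(l_1,\dots,l_k)$ interval tree $T=\bigcup_{i=0}^k\Lambda_i$ is built as follows: $\Lambda_0=\{[L]\}$; if $\Lambda_i$ ($i<k$) consists of pairwise disjoint integer subintervals of $[L]$ each of cardinality $\prod_{j=i+1}^k l_j$, then each $I\in\Lambda_i$ is partitioned into $l_{i+1}$ integer subintervals of equal cardinality, and $\Lambda_{i+1}$ is the set of all these subintervals over all $I\in\Lambda_i$. For $0<j\le k$ and $J\in\Lambda_j$, $J^-$ denotes the unique $I\in\Lambda_{j-1}$ with $J\subset I$; sums $\sum_{J^-=I}$ range over the children of $I$. *)

(* Defs.v *)
From mathcomp Require Import all_boot all_order all_algebra.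
From mathcomp Require Import all_classical all_reals all_analysis.
Set Implicit Arguments. Unset Strict Implicit. Unset Printing Implicit Defensive.

(* An (l_1,...,l_n) interval tree is encoded through
   branching numbers [lt : nat -> nat] (only lt 1, ..., lt n matter).
   Level j (0 <= j <= n) consists of [tcnt lt j] = l_1*...*l_j intervals, each of
   cardinality [tsz lt n j] = l_{j+1}*...*l_n.  The k-th interval of level j
   (0 <= k < tcnt lt j) is the integer interval
   {k * tsz lt n j + 1, ..., (k+1) * tsz lt n j} of [L].
   Its children (J^- = I) are the intervals k * l_{j+1} + t, t < l_{j+1}, of level j+1.
   A family (x_I)_{I in T} indexed by intervals is given by a function
   x : nat -> nat -> R, x_I := x (start offset of I) (cardinality of I); so the
   value depends only on the interval as a set, as in the paper. *)

Definition text (l : nat -> nat) (d m : nat) : nat -> nat :=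
  fun i => if i == d.+1 then m else l i.

Definition tcnt (lt : nat -> nat) (j : nat) : nat := \prod_(1 <= i < j.+1) lt i.

Definition tsz (lt : nat -> nat) (n j : nat) : nat := \prod_(j.+1 <= i < n.+1) lt i.

Definition tnode {R : Type} (x : nat -> nat -> R) (lt : nat -> nat) (n j k : nat) : R :=
  x (k * tsz lt n j) (tsz lt n j).

(* Main.v *)
Require Import Defs.
From mathcomp Require Import all_boot all_order all_algebra.
From mathcomp Require Import all_classical all_reals all_analysis.
From mathcomp Require Import ring lra zify.
Import Order.TTheory GRing.Theory Num.Theory.
Local Open Scope ring_scope.

Lemma tangent_powR {R : realType} (p a x : R) : 1 < p -> 0 <= a -> 0 <= x ->
  a `^ p + p * a `^ (p - 1) * (x - a) <= x `^ p.
Proof.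
move=> p1 a0 x0.
have p0 : 0 < p by lra.
have pm10 : 0 < p - 1 by lra.
pose q := p / (p - 1).
have q0 : 0 < q by rewrite /q divr_gt0.
have pq : p^-1 + q^-1 = 1.
  by rewrite /q invf_div -{1}(div1r p) -mulrDl subrKC mulfV// gt_eqF.
have := @conjugate_powR R x (a `^ (p - 1)) p q x0 (powR_ge0 _ _) p0 q0 pq.
rewrite -powRrM /q mulrCA mulfV ?gt_eqF // mulr1.
have iq : q^-1 = 1 - p^-1 by move: pq; lra.
rewrite -/q iq -(mulr_powRB1 a0 p0).
have pip : p * p^-1 = 1 by rewrite mulfV ?gt_eqF.
set B := a `^ (p - 1); set Y := x `^ p; set ip := p^-1.
move=> H.
have HB : 0 <= B by apply: powR_ge0.
have pip' : p * ip = 1 by [].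
have H2 := ler_wpM2l (ltW p0) H.
have E : p * (Y * ip + a * B * (1 - ip)) = Y + p * a * B - a * B.
  by rewrite /ip; field; rewrite gt_eqF.
rewrite E in H2; lra.
Qed.

Lemma gap_powR {R : realType} (p a x e : R) : 1 < p -> 0 < a -> 0 < e < 1 ->
  0 <= x -> x <= (1 - e) * a ->
  a `^ p + p * a `^ (p - 1) * (x - a) + ((1 - e) `^ p - 1 + p * e) * a `^ p
    <= x `^ p.
Proof.
move=> p1 a0 /andP[e0 e1] x0 xb.
have p0 : 0 < p by lra.
set b := (1 - e) * a.
have b0 : 0 <= b by rewrite /b mulr_ge0 //; lra.
have T := @tangent_powR R p b x p1 b0 x0.
have bA : b `^ p = (1 - e) `^ p * a `^ p by rewrite /b powRM //; lra.
have BA : b `^ (p - 1) <= a `^ (p - 1).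
  apply: ge0_ler_powR; rewrite ?nnegrE; try lra.
  by rewrite /b; nra.
rewrite -(mulr_powRB1 (ltW a0) p0) in bA *.
rewrite -(mulr_powRB1 b0 p0) in T bA.
set A1 := a `^ (p - 1) in BA bA *; set B1 := b `^ (p - 1) in T BA bA *.
set E := (1 - e) `^ p in bA *.
have P : 0 <= (A1 - B1) * (b - x) by apply: mulr_ge0; move: xb; rewrite -/b; lra.
have Hb : b = a - e * a by rewrite /b; ring.
rewrite Hb in T bA P.
nra.
Qed.

Lemma h_pos {R : realType} (p e : R) : 1 < p -> 0 < e < 1 ->
  0 < (1 - e) `^ p - 1 + p * e.
Proof.
move=> p1 /andP[e0 e1].
have p0 : 0 < p by lra.
set c := 1 - e / 2.
have c0 : 0 <= c by rewrite /c; lra.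
have T1 := @tangent_powR R p c (1 - e) p1 c0 ltac:(lra).
have T2 := @tangent_powR R p 1 c p1 ler01 c0.
rewrite !powR1 in T2.
have C1 : c `^ (p - 1) < 1.
  have E1 : (1:R) `^ (p - 1) = 1 by rewrite powR1.
  have := @gt0_ltr_powR R (p - 1) ltac:(lra) c 1.
  rewrite E1; apply; rewrite ?nnegrE /c; lra.
set C := c `^ (p - 1) in T1 C1.
have Hc : 1 - e - c = - (e / 2) by rewrite /c; lra.
rewrite Hc in T1.
have Hc2 : c - 1 = - (e / 2) by rewrite /c; lra.
rewrite Hc2 in T2.
have P : 0 < p * (e / 2) * (1 - C) by apply: mulr_gt0; [apply: mulr_gt0|]; lra.
nra.
Qed.



Lemma sum_tangent_eq {R : realType} (p a : R) (n : nat) (x : nat -> R) :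
  \sum_(t < n) (a `^ p + p * a `^ (p - 1) * (x t - a))
  = n%:R * a `^ p + p * a `^ (p - 1) * (\sum_(t < n) x t - n%:R * a).
Proof.
rewrite big_split /= sumr_const card_ord -mulr_sumr sumrB sumr_const card_ord.
by rewrite !mulr_natl. Qed.

Lemma power_mean {R : realType} (p : R) (n : nat) (x : nat -> R) :
  1 < p -> (forall t, (t < n)%N -> 0 <= x t) ->
  (\sum_(t < n) x t) `^ p <= n%:R `^ (p - 1) * \sum_(t < n) (x t) `^ p.
Proof.
move=> p1 x0.
have p0 : 0 < p by lra.
case: n x0 => [|n] x0.
  by rewrite !big_ord0 powR0 ?mulr0 // gt_eqF.
set S := \sum_(t < n.+1) x t.
have S0 : 0 <= S by apply: sumr_ge0 => t _; apply: x0.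
set N := (n.+1)%:R : R.
have N0 : 0 < N by rewrite /N ltr0n.
pose a := S / N.
have a0 : 0 <= a by rewrite /a divr_ge0 // ltW.
have Sa : S = N * a by rewrite /a mulrC divfK // gt_eqF.
have H : \sum_(t < n.+1) (a `^ p + p * a `^ (p - 1) * (x t - a)) <= \sum_(t < n.+1) (x t) `^ p.
  by apply: ler_sum => t _; apply: tangent_powR => //; apply: x0.
rewrite sum_tangent_eq -/S -/N -Sa subrr mulr0 addr0 in H.
rewrite Sa powRM ?(ltW N0) // -(mulr_powRB1 (ltW N0) p0).
rewrite mulrAC -mulrA.
have -> : N * (a `^ p * N `^ (p - 1)) = N `^ (p - 1) * (N * a `^ p) by ring.
by apply: ler_wpM2l => //; apply: powR_ge0.
Qed.


Lemma stab {R : realType} (p e : R) (n k : nat) (x : nat -> R) :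
  1 < p -> 0 < e < 1 -> (forall t, (t < n)%N -> 0 <= x t) -> (k < n)%N ->
  0 < \sum_(t < n) x t ->
  x k <= (1 - e) * ((\sum_(t < n) x t) / n%:R) ->
  (n%:R + ((1 - e) `^ p - 1 + p * e)) * ((\sum_(t < n) x t) / n%:R) `^ p
    <= \sum_(t < n) (x t) `^ p.
Proof.
move=> p1 e01 x0 kn Spos xk.
have p0 : 0 < p by lra.
have N0 : 0 < n%:R :> R by rewrite ltr0n (leq_ltn_trans _ kn).
set S := \sum_(t < n) x t in Spos xk *.
set a := S / n%:R in xk *.
have a0 : 0 < a by rewrite /a divr_gt0.
have Sa : S = n%:R * a by rewrite /a mulrC divfK // gt_eqF.
set h := (1 - e) `^ p - 1 + p * e.
pose f t := a `^ p + p * a `^ (p - 1) * (x t - a).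
have H : \sum_(t < n) f t + h * a `^ p <= \sum_(t < n) (x t) `^ p.
  rewrite (bigD1 (Ordinal kn)) //= (bigD1 (Ordinal kn) (F := fun t : 'I_n => x t `^ p)) //=.
  rewrite addrAC; apply: lerD.
    by apply: gap_powR => //; apply: x0.
  by apply: ler_sum => t _; apply: tangent_powR => //; [apply: ltW | apply: x0].
rewrite /f sum_tangent_eq -/S -Sa subrr mulr0 addr0 in H.
by rewrite mulrDl.
Qed.


Lemma level_core {R : realType} (p e eta tau h D : R) (N : nat) (x Av : nat -> R) (A0 : R) :
  1 < p -> 0 < e < 1 -> h = (1 - e) `^ p - 1 + p * e ->
  0 < eta -> eta <= 1/2 -> 4 * eta <= tau -> 0 < tau -> tau <= 1/2 ->
  8 * eta * (D + 1) <= h -> N%:R <= D + 1 -> 1 - tau / 2 <= (1 - e) `^ p ->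
  (0 < N)%N ->
  (forall k, (k < N)%N -> 0 <= x k) ->
  (forall k, (k < N)%N -> x k `^ p <= (1 + eta) * Av k) ->
  A0 = N%:R `^ (p - 1) * \sum_(k < N) Av k ->
  (1 - eta) * A0 < (\sum_(k < N) x k) `^ p ->
  0 < (\sum_(k < N) Av k) / N%:R /\
  forall k, (k < N)%N ->
    (1 - tau) * ((\sum_(k < N) Av k) / N%:R) <= x k `^ p /\
    Av k <= (1 + D * tau) * ((\sum_(k < N) Av k) / N%:R).
Proof.
move=> p1 e01 hE eta0 eta12 etatau tau0 tau12 etah ND etau N0 x0 xA A0E Hroot.
have p0 : 0 < p by lra.
have hpos : 0 < h by rewrite hE; apply: h_pos.
have NR0 : 0 < N%:R :> R by rewrite ltr0n.
have NP0 : 0 < N%:R `^ (p - 1) :> R by apply: powR_gt0.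
set SA := \sum_(k < N) Av k in A0E *.
set Sx := \sum_(k < N) x k in Hroot *.
have Av0 : forall k, (k < N)%N -> 0 <= Av k.
  move=> k kN; have := xA k kN; have := powR_ge0 (x k) p; nra.
have SA0 : 0 <= SA by apply: sumr_ge0 => k _; apply: Av0.
have Sx0 : 0 <= Sx by apply: sumr_ge0 => k _; apply: x0.
have A00 : 0 <= A0 by rewrite A0E mulr_ge0 // ltW.
have Sxp : 0 < Sx `^ p by nra.
have Sxpos : 0 < Sx.
  rewrite lt_neqAle Sx0 andbT; apply/negP => /eqP S0.
  by move: Sxp; rewrite -S0 powR0 ?ltxx // gt_eqF.
set a := Sx / N%:R.
have a0 : 0 < a by rewrite /a divr_gt0.
have Sa : Sx = N%:R * a by rewrite /a mulrC divfK // gt_eqF.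
have Sxpa : Sx `^ p = N%:R `^ (p - 1) * (N%:R * a `^ p).
  by rewrite Sa powRM ?ltW // -(mulr_powRB1 (ltW NR0) p0); ring.
have ap0 : 0 < a `^ p by apply: powR_gt0.
have Sxp_le : \sum_(k < N) x k `^ p <= (1 + eta) * SA.
  rewrite /SA mulr_sumr; apply: ler_sum => k _; exact: xA.
have H1 : (1 - eta) * SA < N%:R * a `^ p.
  have : N%:R `^ (p - 1) * ((1 - eta) * SA) < N%:R `^ (p - 1) * (N%:R * a `^ p).
    by rewrite -Sxpa; move: Hroot; rewrite A0E; congr (_ < _); ring.
  by rewrite ltr_pM2l.
have big : forall k, (k < N)%N -> (1 - e) * a < x k.
  move=> k kN; rewrite ltNge; apply/negP => xk.
  have := @stab R p e N k x p1 e01 x0 kN Sxpos xk.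
  rewrite -/Sx -/a -hE => St.
  have St2 : (N%:R + h) * a `^ p <= (1 + eta) * SA by apply: le_trans Sxp_le.
  have H3 : (1 - eta) * ((N%:R + h) * a `^ p) <= (1 + eta) * ((1 - eta) * SA).
    have : (1 - eta) * ((N%:R + h) * a `^ p) <= (1 - eta) * ((1 + eta) * SA).
      by apply: ler_wpM2l => //; lra.
    by move=> H; apply: (le_trans H); rewrite mulrCA.
  have H4 : (1 + eta) * ((1 - eta) * SA) < (1 + eta) * (N%:R * a `^ p).
    by rewrite ltr_pM2l //; lra.
  have H5 : (1 - eta) * (N%:R + h) < (1 + eta) * N%:R.
    have := le_lt_trans H3 H4.
    by rewrite !mulrA ltr_pM2r.
  have : h * (1 - eta) < 2 * eta * N%:R by lra.
  have : 2 * eta * N%:R <= 2 * eta * (D + 1) by apply: ler_wpM2l => //; lra.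
  nra.
set Ab := SA / N%:R.
have SAb : SA = N%:R * Ab by rewrite /Ab mulrC divfK // gt_eqF.
have Ab0 : 0 <= Ab by rewrite /Ab divr_ge0 // ltW.
have apAb : (1 - eta) * Ab < a `^ p.
  rewrite SAb in H1; move: H1; rewrite mulrCA ltr_pM2l //.
have lowx : forall k, (k < N)%N -> (1 - tau / 2) * (1 - eta) * Ab <= x k `^ p.
  move=> k kN.
  have : ((1 - e) * a) `^ p <= x k `^ p.
    apply: ge0_ler_powR; rewrite ?nnegrE; try lra.
      by apply: mulr_ge0; lra.
    by apply: x0.
    by apply: ltW; apply: big.
  rewrite powRM; [|lra|exact: ltW].
  set E := (1 - e) `^ p in etau *.
  move=> H; apply: (le_trans _ H).
  have Hm : (1 - eta) * Ab <= a `^ p by apply: ltW.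
  have : 0 <= (1 - eta) * Ab by apply: mulr_ge0 => //; lra.
  nra.
have lowA : forall k, (k < N)%N -> (1 - tau) * Ab <= Av k.
  move=> k kN; have := lowx k kN; have := xA k kN.
  have : (1 + eta) * (1 - tau) <= (1 - tau / 2) * (1 - eta) by nra.
  nra.
split.
  have PM := @power_mean R p N x p1 x0.
  rewrite -/Sx in PM.
  have : 0 < \sum_(k < N) x k `^ p.
    have : 0 < N%:R `^ (p - 1) * \sum_(k < N) x k `^ p by apply: lt_le_trans PM.
    by rewrite pmulr_rgt0.
  move=> Hs; have : 0 < SA by nra.
  by move=> HSA; rewrite /Ab divr_gt0.
move=> k kN; split.
  apply: le_trans (lowx k kN); apply: ler_wpM2r => //; nra.
set c := (1 - tau) * Ab.
have Hs : Av k - c <= \sum_(i < N) (Av i - c).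
  rewrite (bigD1 (Ordinal kN)) //= lerDl.
  by apply: sumr_ge0 => i _; rewrite subr_ge0; apply: lowA.
rewrite sumrB sumr_const card_ord -/SA -mulr_natl in Hs.
have : (N%:R - 1) * tau * Ab <= D * tau * Ab.
  apply: ler_wpM2r => //; apply: ler_wpM2r; lra.
move: Hs; rewrite /c SAb; nra.
Qed.


Lemma sum_split {R : realType} (f : nat -> R) (c l : nat) :
  \sum_(k < (c * l)%N) f k = \sum_(k < c) \sum_(t < l) f ((k : nat) * l + t).
Proof.
elim: c => [|c IH]; first by rewrite mul0n !big_ord0.
rewrite big_ord_recr /= -IH mulSnr big_split_ord /=.
by congr (_ + _); apply: eq_bigr => i _.
Qed.

Lemma tcntS (b : nat -> nat) j : tcnt b j.+1 = (tcnt b j * b j.+1)%N.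
Proof. by rewrite /tcnt big_nat_recr. Qed.

Lemma tcnt0 (b : nat -> nat) : tcnt b 0 = 1%N.
Proof. by rewrite /tcnt big_geq. Qed.

Lemma child_lt (b : nat -> nat) j k t :
  (k < tcnt b j)%N -> (t < b j.+1)%N -> (k * b j.+1 + t < tcnt b j.+1)%N.
Proof.
move=> kc tb; rewrite tcntS.
have : (k.+1 * b j.+1 <= tcnt b j * b j.+1)%N by rewrite leq_mul2r kc orbT.
rewrite mulSn; lia.
Qed.

Lemma tcnt_pos (b : nat -> nat) j :
  (forall i, (1 <= i <= j)%N -> (0 < b i)%N) -> (0 < tcnt b j)%N.
Proof.
elim: j => [|j IH] H; first by rewrite tcnt0.
rewrite tcntS muln_gt0 IH ?H //.
  by rewrite ltnSn.
by move=> i /andP[i1 ij]; apply: H; rewrite i1 (leq_trans ij).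
Qed.

Lemma tcnt_mono (b : nat -> nat) j d :
  (forall i, (1 <= i <= d)%N -> (0 < b i)%N) -> (j <= d)%N -> (tcnt b j <= tcnt b d)%N.
Proof.
move=> H; elim: d H => [|d IH] H jd.
  by move: jd; rewrite leqn0 => /eqP ->.
move: jd; rewrite leq_eqVlt => /orP[/eqP -> //|jd].
have H' : forall i, (1 <= i <= d)%N -> (0 < b i)%N.
  by move=> i /andP[i1 id]; apply: H; rewrite i1 (leq_trans id).
apply: (leq_trans (IH H' jd)); rewrite tcntS leq_pmulr //.
by apply: H; rewrite ltnSn.
Qed.

Lemma desc_bound {R : realType} (p C : R) (b : nat -> nat) (d : nat)
    (F A : nat -> nat -> R) :
  1 < p -> 0 <= C ->
  (forall j k, (j <= d)%N -> (k < tcnt b j)%N -> 0 <= F j k) ->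
  (forall j k, (j < d)%N -> (k < tcnt b j)%N ->
     F j k <= \sum_(t < b j.+1) F j.+1 (k * b j.+1 + t)) ->
  (forall j k, (j < d)%N -> A j k = (b j.+1)%:R `^ (p - 1) *
     \sum_(t < b j.+1) A j.+1 (k * b j.+1 + t)) ->
  (forall k, (k < tcnt b d)%N -> F d k `^ p <= C * A d k) ->
  forall j k, (j <= d)%N -> (k < tcnt b j)%N -> F j k `^ p <= C * A j k.
Proof.
move=> p1 C0 F0 Fsub Arec Hd j.
have p0 : 0 < p by lra.
move Ee : (d - j)%N => e; elim: e j Ee => [|e IH] j Ee k jd kc.
  have -> : j = d by apply/eqP; rewrite eqn_leq jd /=; rewrite -subn_eq0 Ee.
  by apply: Hd; move: kc; have -> : j = d by apply/eqP; rewrite eqn_leq jd /= -subn_eq0 Ee.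
have jd' : (j < d)%N by rewrite -subn_gt0 Ee.
have ch : forall t, (t < b j.+1)%N -> F j.+1 (k * b j.+1 + t) `^ p <= C * A j.+1 (k * b j.+1 + t).
  move=> t tb; apply: IH => //; first by rewrite subnS Ee.
  exact: child_lt.
rewrite Arec //.
apply: (le_trans (y := (\sum_(t < b j.+1) F j.+1 (k * b j.+1 + t)) `^ p)).
  apply: ge0_ler_powR; rewrite ?nnegrE; try lra.
  - by apply: F0 => //; apply: ltnW.
  - by apply: sumr_ge0 => t _; apply: F0 => //; apply: child_lt.
  - by apply: Fsub.
apply: (le_trans (@power_mean R p (b j.+1) (fun t => F j.+1 (k * b j.+1 + t)) p1 _)).
  by move=> t tb; apply: F0 => //; apply: child_lt.
rewrite mulrCA; apply: ler_wpM2l; first by apply: powR_ge0.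
rewrite mulr_sumr; apply: ler_sum => t _; by apply: ch.
Qed.



Lemma root_chain {R : realType} (b : nat -> nat) (n : nat) (F : nat -> nat -> R) :
  (forall j k, (j < n)%N -> (k < tcnt b j)%N ->
     F j k <= \sum_(t < b j.+1) F j.+1 (k * b j.+1 + t)) ->
  forall j, (j <= n)%N -> F 0 0 <= \sum_(k < tcnt b j) F j k.
Proof.
move=> Fsub; elim => [|j IH] jn.
  by rewrite tcnt0 big_ord1.
apply: (le_trans (IH (ltnW jn))).
rewrite tcntS sum_split; apply: ler_sum => k _; apply: Fsub; [exact: jn | exact: ltn_ord].
Qed.

Lemma A_chain {R : realType} (p : R) (b : nat -> nat) (d : nat) (A : nat -> nat -> R) :
  (forall j k, (j < d)%N -> A j k = (b j.+1)%:R `^ (p - 1) *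
     \sum_(t < b j.+1) A j.+1 (k * b j.+1 + t)) ->
  forall j, (j <= d)%N -> A 0 0 = (tcnt b j)%:R `^ (p - 1) * \sum_(k < tcnt b j) A j k.
Proof.
move=> Arec; elim => [|j IH] jd.
  have E : forall x : R, x = 1 -> x `^ (p - 1) = 1 by move=> x ->; rewrite powR1.
  by rewrite tcnt0 big_ord1 E ?mul1r.
rewrite IH; last exact: ltnW.
rewrite tcntS sum_split natrM powRM // -mulrA; congr (_ * _).
rewrite mulr_sumr; apply: eq_bigr => k _; rewrite Arec //.
Qed.


Definition Af {R : realType} (b : nat -> nat) (n : nat) (q : R) (Lf : nat -> R)
  (j k : nat) : R :=
  (\prod_(j.+1 <= i < n.+1) (b i)%:R `^ q) * \sum_(u < tsz b n j) Lf (k * tsz b n j + u).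

Lemma Af_rec {R : realType} (b : nat -> nat) (n : nat) (q : R) (Lf : nat -> R) j k :
  (j < n)%N ->
  Af b n q Lf j k = (b j.+1)%:R `^ q * \sum_(t < b j.+1) Af b n q Lf j.+1 (k * b j.+1 + t).
Proof.
move=> jn; rewrite /Af.
have Ht : tsz b n j = (b j.+1 * tsz b n j.+1)%N by rewrite /tsz big_ltn.
rewrite big_ltn // -mulrA; congr (_ * _).
rewrite -mulr_sumr; congr (_ * _).
rewrite Ht (@sum_split R (fun u => Lf (k * (b j.+1 * tsz b n j.+1)%N + u))).
apply: eq_bigr => t _; apply: eq_bigr => u _.
congr Lf; ring.
Qed.


Lemma Af_leaf {R : realType} (b : nat -> nat) (n : nat) (q : R) (Lf : nat -> R) k :
  Af b n q Lf n k = Lf k.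
Proof.
rewrite /Af /tsz !big_geq // big_ord1 mul1r.
by congr Lf; rewrite mulr1; exact: addn0.
Qed.


Lemma concl1_num {R : realType} (X Y T Mp tau D Ab S1v S2v Av : R) :
  0 < T -> X = Mp * T -> 0 < Ab -> 0 <= D -> 0 < tau ->
  tau * ((D + 1) * X) <= X - Y -> 0 < Y -> Y < X ->
  T * S1v <= Av -> Av <= (1 + D * tau) * Ab -> (1 - tau) * Ab <= Y * S2v ->
  Mp * S2v < S1v -> False.
Proof.
move=> T0 XE Ab0 D0 tau0 tauXY Y0 YX TS1 A1 R2 H1.
have f2 : T * (Mp * S2v) < T * S1v by rewrite ltr_pM2l.
have f3 : X * S2v < (1 + D * tau) * Ab.
  have -> : X * S2v = T * (Mp * S2v) by rewrite XE; ring.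
  lra.
have f4 : X * ((1 - tau) * Ab) <= X * (Y * S2v) by apply: ler_wpM2l; lra.
have f5 : Y * (X * S2v) < Y * ((1 + D * tau) * Ab) by rewrite ltr_pM2l.
have f6 : (X * (1 - tau) - Y * (1 + D * tau)) * Ab < 0.
  have -> : (X * (1 - tau) - Y * (1 + D * tau)) * Ab =
    X * ((1 - tau) * Ab) - Y * ((1 + D * tau) * Ab) by ring.
  have E : X * (Y * S2v) = Y * (X * S2v) by ring.
  lra.
have f7 : 0 <= X * (1 - tau) - Y * (1 + D * tau).
  have : 0 <= D * tau * (X - Y) by apply: mulr_ge0; [apply: mulr_ge0; lra | lra].
  have E1 : tau * ((D + 1) * X) = D * tau * X + tau * X by ring.
  have E2 : D * tau * (X - Y) = D * tau * X - Y * (D * tau) by ring.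
  have E3 : X * (1 - tau) - Y * (1 + D * tau) = X - tau * X - Y - Y * (D * tau) by ring.
  lra.
have : 0 <= (X * (1 - tau) - Y * (1 + D * tau)) * Ab by apply: mulr_ge0 => //; lra.
lra.
Qed.

Lemma concl2_num {R : realType} (mu eta tau D Ab B Sr Aik Rik : R) :
  0 < mu < 1 -> 0 < eta -> 4 * eta <= tau -> tau <= 1/2 -> 0 <= D -> 0 < Ab ->
  tau * (4 * (D + 1)) <= mu -> 0 <= B ->
  B * Sr <= (1 + eta) * Aik -> Aik <= (1 + D * tau) * Ab -> (1 - tau) * Ab <= Rik ->
  (1 - mu) * B * Sr < Rik.
Proof.
move=> /andP[mu0 mu1] eta0 etatau tau12 D0 Ab0 taumu B0 f1 HAu Hr.
have tau0 : 0 < tau by lra.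
have Dt : 0 <= D * tau by apply: mulr_ge0; lra.
have g0 : (1 + eta) * (1 + D * tau) <= (1 + tau) * (1 + D * tau).
  by apply: ler_wpM2r; lra.
have g1 : (1 + eta) * (1 + D * tau) <= 1 + (2 * D + 1) * tau.
  have : 0 <= D * tau * (1 - tau) by apply: mulr_ge0; lra.
  have E : (1 + tau) * (1 + D * tau) = 1 + (2 * D + 1) * tau - D * tau * (1 - tau) by ring.
  lra.
have g2 : (1 - mu) * ((1 + eta) * (1 + D * tau)) <= (1 - mu) * (1 + (2 * D + 1) * tau).
  by apply: ler_wpM2l; lra.
have g3 : 0 <= mu * ((2 * D + 1) * tau).
  by apply: mulr_ge0; [lra | apply: mulr_ge0; lra].
have E4 : (1 - mu) * (1 + (2 * D + 1) * tau) = 1 - mu + (2 * D + 1) * tau - mu * ((2 * D + 1) * tau) by ring.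
have E5 : tau * (4 * (D + 1)) = 4 * (D * tau) + 4 * tau by ring.
have E6 : (2 * D + 1) * tau = 2 * (D * tau) + tau by ring.
have num : (1 - mu) * ((1 + eta) * (1 + D * tau)) < 1 - tau by lra.
have h1 : (1 - mu) * B * Sr <= (1 - mu) * ((1 + eta) * Aik).
  by rewrite -mulrA; apply: ler_wpM2l; lra.
have h2 : (1 - mu) * ((1 + eta) * Aik) <= (1 - mu) * ((1 + eta) * ((1 + D * tau) * Ab)).
  apply: ler_wpM2l; first lra.
  by apply: ler_wpM2l; lra.
have h3 : (1 - mu) * ((1 + eta) * ((1 + D * tau) * Ab)) < (1 - tau) * Ab.
  have -> : (1 - mu) * ((1 + eta) * ((1 + D * tau) * Ab)) = ((1 - mu) * ((1 + eta) * (1 + D * tau))) * Ab by ring.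
  by rewrite ltr_pM2r.
lra.
Qed.


Lemma tcnt_text (l : nat -> nat) d m j : (j <= d)%N -> tcnt (text l d m) j = tcnt l j.
Proof.
move=> jd; rewrite /tcnt; apply: eq_big_nat => i /andP[_ ij].
rewrite /text; case: eqP => // E; exfalso; lia.
Qed.

Lemma text_pos (l : nat -> nat) d m :
  (forall i : nat, (1 <= i <= d)%N -> (0 < l i)%N) -> (0 < m)%N ->
  forall i, (1 <= i <= d.+1)%N -> (0 < text l d m i)%N.
Proof.
move=> lp m0 i /andP[i1 id]; rewrite /text; case: eqP => // E.
apply: lp; rewrite i1 /=; lia.
Qed.

Lemma minr_facts {R : realType} (a b : R) : Num.min a b <= a /\ Num.min a b <= b.
Proof. by rewrite !ge_min !lexx orbT. Qed.

Theorem lemma3p4 (R : realType) (p : R) (d : nat) (l : nat -> nat)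
    (mu lam Theta M : R) :
  1 < p ->
  (forall i : nat, (1 <= i <= d)%N -> (0 < l i)%N) ->
  0 < mu < 1 -> 0 < lam -> 0 < Theta -> lam / Theta < M ->
  forall eta1 : R, 0 < eta1 < 1 ->
  exists eta : R, 0 < eta < eta1 /\
  forall (m : nat) (r s : nat -> nat -> R),
    (0 < m)%N ->
    let lt := text l d m in
    let n := d.+1 in
    (* non-negativity on T *)
    (forall j k : nat, (j <= n)%N -> (k < tcnt lt j)%N ->
       0 <= tnode r lt n j k /\ 0 <= tnode s lt n j k) ->
    (* (i) *)
    (forall j k : nat, (j <= n)%N -> (k < tcnt lt j)%N ->
       tnode r lt n j k <= lam * tnode s lt n j k) ->
    (* (ii) *)
    (forall j k : nat, (j < n)%N -> (k < tcnt lt j)%N ->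
       tnode r lt n j k <= \sum_(t < lt j.+1) tnode r lt n j.+1 (k * lt j.+1 + t) /\
       tnode s lt n j k <= \sum_(t < lt j.+1) tnode s lt n j.+1 (k * lt j.+1 + t)) ->
    (* (iii) *)
    (forall k : nat, (k < tcnt lt d)%N ->
       tnode r lt n d k `^ p <=
         (1 + eta) * Theta `^ p * (m%:R) `^ (p - 1) *
         \sum_(t < m) tnode s lt n n (k * m + t) `^ p) ->
    (* (iv) *)
    (1 - eta) * Theta `^ p * (\prod_(1 <= i < n.+1) (lt i)%:R `^ (p - 1)) *
       \sum_(k < tcnt lt n) tnode s lt n n k `^ p
      < tnode r lt n 0 0 `^ p ->
    (* conclusions *)
    (forall j : nat, (j <= d)%N ->
       forall k1 k2 : nat, (k1 < tcnt lt j)%N -> (k2 < tcnt lt j)%N ->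
         tnode s lt n j k1 <= M * tnode s lt n j k2) /\
    (forall i k : nat, (i < d)%N -> (k < tcnt lt i)%N ->
       (1 - mu) * (lt i.+1)%:R `^ (p - 1) *
         \sum_(t < lt i.+1) tnode r lt n i.+1 (k * lt i.+1 + t) `^ p
       < tnode r lt n i k `^ p).
Proof.
move=> p1 lpos /andP[mu0 mu1] lam0 Th0 MH eta1 /andP[eta10 eta11].
have p0 : 0 < p by lra.
set Nd : R := (tcnt l d)%:R.
have Nd1 : 1 <= Nd by rewrite /Nd ler1n; apply: tcnt_pos.
set D := Nd - 1.
have MT : lam < M * Theta by rewrite -ltr_pdivrMr.
set X := (M * Theta) `^ p.
set Y := lam `^ p.
have Y0 : 0 < Y by apply: powR_gt0.
have YX : Y < X by apply: gt0_ltr_powR; rewrite ?nnegrE; lra.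
set tau := Num.min (Num.min (1/2) ((X - Y) / (Nd * X))) (mu / (4 * Nd)).
have [tau1 tau2] := minr_facts (Num.min (1/2) ((X - Y) / (Nd * X))) (mu / (4 * Nd)).
have [tau3 tau4] := minr_facts (1/2) ((X - Y) / (Nd * X)).
have tau0 : 0 < tau.
  rewrite /tau !lt_min; apply/andP; split; [apply/andP; split|].
  - lra.
  - apply: divr_gt0; [lra | apply: mulr_gt0; lra].
  - apply: divr_gt0; lra.
rewrite -/tau in tau1 tau2 tau3 tau4.
have tau12 : tau <= 1/2 by lra.
have tauXY : tau * (Nd * X) <= X - Y.
  by rewrite -ler_pdivlMr; [lra | apply: mulr_gt0; lra].
have taumu : tau * (4 * Nd) <= mu by rewrite -ler_pdivlMr; lra.
set e := tau / (2 * p).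
have e0 : 0 < e by rewrite /e divr_gt0 //; lra.
have pe : p * e = tau / 2 by rewrite /e; field; lra.
have e1 : e < 1.
  have : p * e < p * 1 by rewrite mulr1; lra.
  by rewrite ltr_pM2l.
have e01 : 0 < e < 1 by rewrite e0 e1.
have Ee : 1 - tau / 2 <= (1 - e) `^ p.
  have := @tangent_powR R p 1 (1 - e) p1 ler01 ltac:(lra).
  have E1 : forall q : R, (1:R) `^ q = 1 by move=> q; rewrite powR1.
  rewrite !E1; lra.
set h := (1 - e) `^ p - 1 + p * e.
have h0 : 0 < h by apply: h_pos.
set eta := Num.min (Num.min (eta1 / 2) (tau / 4)) (h / (8 * Nd)).
have [et1 et2] := minr_facts (Num.min (eta1 / 2) (tau / 4)) (h / (8 * Nd)).
have [et3 et4] := minr_facts (eta1 / 2) (tau / 4).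
have eta0 : 0 < eta.
  rewrite /eta !lt_min; apply/andP; split; [apply/andP; split|].
  - lra.
  - lra.
  - apply: divr_gt0; lra.
rewrite -/eta in et1 et2 et3 et4.
have etah : 8 * eta * Nd <= h.
  have : eta * (8 * Nd) <= h by rewrite -ler_pdivlMr; lra.
  lra.
exists eta; split; first by apply/andP; split; lra.
move=> m r s m0 lt n Hnn Hi Hii Hiii Hiv.
pose Lf := fun u => Theta `^ p * tnode s lt n n u `^ p.
pose A := Af lt n (p - 1) Lf.
have Arec : forall j k, (j < n)%N -> A j k = (lt j.+1)%:R `^ (p - 1) *
     \sum_(t < lt j.+1) A j.+1 (k * lt j.+1 + t).
  by move=> j k jn; exact: Af_rec.
have Aleaf : forall u, A n u = Lf u by move=> u; exact: Af_leaf.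
have ltpos : forall i, (1 <= i <= n)%N -> (0 < lt i)%N by exact: text_pos.
have ltd : lt d.+1 = m by rewrite /lt /text eqxx.
have Tp0 : 0 < Theta `^ p by apply: powR_gt0.
have L1 : forall j k, (j <= d)%N -> (k < tcnt lt j)%N ->
    tnode r lt n j k `^ p <= (1 + eta) * A j k.
  apply: (@desc_bound R p (1 + eta) lt d (tnode r lt n) A p1).
  - lra.
  - by move=> j k jd kc; exact: (Hnn j k (leqW jd) kc).1.
  - by move=> j k jd kc; exact: (Hii j k (leqW jd) kc).1.
  - by move=> j k jd; apply: Arec; exact: leqW.
  - move=> k kc; rewrite (Arec d k (ltnSn d)) ltd.
    under eq_bigr => t _ do rewrite Aleaf.
    rewrite /Lf -mulr_sumr.
    apply: (le_trans (Hiii k kc)); rewrite le_eqVlt; apply/orP; left; apply/eqP; ring.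
have L2 : forall j k, (j <= n)%N -> (k < tcnt lt j)%N ->
    tnode s lt n j k `^ p <= (Theta `^ p)^-1 * A j k.
  apply: (@desc_bound R p ((Theta `^ p)^-1) lt n (tnode s lt n) A p1).
  - by rewrite invr_ge0; apply: ltW.
  - by move=> j k jd kc; exact: (Hnn j k jd kc).2.
  - by move=> j k jd kc; exact: (Hii j k jd kc).2.
  - by move=> j k jd; apply: Arec.
  - by move=> k kc; rewrite Aleaf /Lf mulKf // gt_eqF.
have L3 : forall j, (j <= n)%N -> tnode r lt n 0 0 <= \sum_(k < tcnt lt j) tnode r lt n j k.
  apply: root_chain => j k jn kc; exact: (Hii j k jn kc).1.
have L4 : forall j, (j <= n)%N -> A 0 0 = (tcnt lt j)%:R `^ (p - 1) * \sum_(k < tcnt lt j) A j k.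
  by apply: A_chain => j k jn; apply: Arec.
have A00E : A 0 0 = Theta `^ p * (\prod_(1 <= i < n.+1) (lt i)%:R `^ (p - 1)) *
    \sum_(k < tcnt lt n) tnode s lt n n k `^ p.
  rewrite /A /Af.
  have -> : tsz lt n 0 = tcnt lt n by [].
  rewrite /Lf -mulr_sumr; ring.
have Hroot : (1 - eta) * A 0 0 < tnode r lt n 0 0 `^ p.
  have -> : (1 - eta) * A 0 0 = (1 - eta) * Theta `^ p *
     (\prod_(1 <= i < n.+1) (lt i)%:R `^ (p - 1)) *
    \sum_(k < tcnt lt n) tnode s lt n n k `^ p by rewrite A00E; ring.
  exact: Hiv.
have DNd : D + 1 = Nd by rewrite /D; ring.
have Lev : forall j, (j <= d)%N ->
  0 < (\sum_(k < tcnt lt j) A j k) / (tcnt lt j)%:R /\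
  forall k, (k < tcnt lt j)%N ->
    (1 - tau) * ((\sum_(k < tcnt lt j) A j k) / (tcnt lt j)%:R) <= tnode r lt n j k `^ p /\
    A j k <= (1 + D * tau) * ((\sum_(k < tcnt lt j) A j k) / (tcnt lt j)%:R).
  move=> j jd.
  apply: (@level_core R p e eta tau h D (tcnt lt j) (tnode r lt n j) (A j) (A 0 0)) => //.
  - lra.
  - lra.
  - by rewrite DNd; lra.
  - rewrite DNd /Nd ler_nat tcnt_text //; exact: tcnt_mono.
  - apply: tcnt_pos => i /andP[i1 ij]; apply: ltpos; rewrite i1 /=.
    exact: (leq_trans ij (leq_trans jd (leqnSn d))).
  - by move=> k kc; exact: (Hnn j k (leqW jd) kc).1.
  - by move=> k kc; apply: L1.
  - by apply: L4; exact: leqW.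
  - apply: (lt_le_trans Hroot); apply: ge0_ler_powR; rewrite ?nnegrE; try lra.
    + have tc0 : (0 < tcnt lt 0)%N by rewrite tcnt0.
      exact: (Hnn 0 0 (leq0n _) tc0).1.
    + by apply: sumr_ge0 => k _; apply: (Hnn j k (leqW jd) _).1.
    + by apply: L3; exact: leqW.
have D0 : 0 <= D by rewrite /D subr_ge0.
have M0 : 0 < M by apply: lt_trans MH; apply: divr_gt0.
split.
  move=> j jd k1 k2 k1c k2c.
  have [Ab0 HL] := Lev j jd.
  set Ab := (\sum_(k < tcnt lt j) A j k) / (tcnt lt j)%:R in Ab0 HL.
  have S1 := L2 j k1 (leqW jd) k1c.
  have A1 := (HL k1 k1c).2.
  have R2 := (HL k2 k2c).1.
  have s20 : 0 <= tnode s lt n j k2 by exact: (Hnn j k2 (leqW jd) k2c).2.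
  have r20 : 0 <= tnode r lt n j k2 by exact: (Hnn j k2 (leqW jd) k2c).1.
  have r2s2 : tnode r lt n j k2 `^ p <= Y * tnode s lt n j k2 `^ p.
    rewrite /Y -powRM ?(ltW lam0) //.
    apply: ge0_ler_powR; rewrite ?nnegrE ?(ltW p0) //.
      by apply: mulr_ge0 => //; apply: ltW.
    exact: (Hi j k2 (leqW jd) k2c).
  rewrite leNgt; apply/negP => Hlt.
  have H1 : (M * tnode s lt n j k2) `^ p < tnode s lt n j k1 `^ p.
    apply: gt0_ltr_powR; rewrite ?nnegrE //.
      by apply: mulr_ge0 => //; apply: ltW.
    by apply: le_trans (ltW Hlt); apply: mulr_ge0 => //; apply: ltW.
  rewrite powRM ?(ltW M0) // in H1.
  have XE : X = M `^ p * Theta `^ p by rewrite /X powRM // ltW.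
  have TS1 : Theta `^ p * tnode s lt n j k1 `^ p <= A j k1.
    have := ler_wpM2l (ltW Tp0) S1; rewrite mulrA mulfV ?gt_eqF // mul1r.
    by move=> H; apply: le_trans H _.
  exfalso; apply: (@concl1_num R X Y (Theta `^ p) (M `^ p) tau D Ab _ _ (A j k1)
      Tp0 XE Ab0 D0 tau0 _ Y0 YX TS1 A1 (le_trans R2 r2s2) H1).
  by rewrite DNd.
move=> i k id kc.
have [Ab0 HL] := Lev i (ltnW id).
set Ab := (\sum_(k < tcnt lt i) A i k) / (tcnt lt i)%:R in Ab0 HL.
have Hs : \sum_(t < lt i.+1) tnode r lt n i.+1 (k * lt i.+1 + t) `^ p <=
          (1 + eta) * \sum_(t < lt i.+1) A i.+1 (k * lt i.+1 + t).
  rewrite mulr_sumr; apply: ler_sum => t _; apply: L1 => //.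
  exact: child_lt.
have HA := Arec i k (leqW id).
have B0 : 0 <= (lt i.+1)%:R `^ (p - 1) by apply: powR_ge0.
apply: (@concl2_num R mu eta tau D Ab _ _ (A i k)) => //.
- by rewrite mu0 mu1.
- by move: et4; rewrite ler_pdivlMr //; lra.
- by rewrite DNd.
- rewrite HA mulrCA; apply: ler_wpM2l => //.
- exact: (HL k kc).2.
- exact: (HL k kc).1.
Qed.
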